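(* Consider an instance of additive multislope ski rental with states $0,\dots,k$, buying costs $b_0<b_1<\dots<b_k$ and rental rates $r_0>r_1>\dots>r_k\ge 0$, such that $s_1<s_2<\dots<s_k$ where $s_i=\frac{b_i-b_{i-1}}{r_{i-1}-r_i}$. Let $c\ge 1$. If there exists a $c$-competitive profile $p$ all of whose component functions $p_0,\dots,p_k$ are continuous, then there exists a prudent $c$-competitive profile $\tilde p$.
   Context: A profile is a vector $p(t)=(p_0(t),\dots,p_k(t))$ of nonnegative functions of $t\ge0$ with $\sum_{i=0}^kp_i(t)=1$ for all $t$ ($p_i(t)$ is the probability of being in state $i$ at time $t$). Its expected buying cost is $B_p(t)=\sum_ip_i(t)b_i$, its expected rental rate is $R_p(t)=\sum_ip_i(t)r_i$, and its expected total cost is $X_p(t)=B_p(t)+\int_0^tR_p(z)\,dz$. With $\textsc{opt}(t)=\min_i(b_i+r_it)$, a profile is $c$-competitive if $X_p(t)\le c\cdot\textsc{opt}(t)$ for all $t\ge0$. Slope $i$ is active at time $t$ if $p_i(t)>0$; a profile is prudent if at every time $t$ the set of active slopes consists of either one slope or two consecutive slopes $i,i+1$. *)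

(* Defs.v *)
From Stdlib Require Import Reals Lra.
From Coquelicot Require Import Coquelicot.
Open Scope R_scope.

(* A profile is p : nat -> R -> R, with p i t the probability of state i at time t.
   Only indices 0..k and times t >= 0 are relevant. *)

Definition is_profile (k : nat) (p : nat -> R -> R) : Prop :=
  forall t, 0 <= t ->
    (forall i, (i <= k)%nat -> 0 <= p i t) /\
    sum_f_R0 (fun i => p i t) k = 1.

Definition Bcost (k : nat) (b : nat -> R) (p : nat -> R -> R) (t : R) : R :=
  sum_f_R0 (fun i => p i t * b i) k.

Definition Rrate (k : nat) (r : nat -> R) (p : nat -> R -> R) (t : R) : R :=
  sum_f_R0 (fun i => p i t * r i) k.

Definition Xcost (k : nat) (b r : nat -> R) (p : nat -> R -> R) (t : R) : R :=
  Bcost k b p t + RInt (Rrate k r p) 0 t.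

Fixpoint minUpTo (f : nat -> R) (n : nat) : R :=
  match n with
  | O => f O
  | S m => Rmin (minUpTo f m) (f (S m))
  end.

Definition OPT (k : nat) (b r : nat -> R) (t : R) : R :=
  minUpTo (fun i => b i + r i * t) k.

Definition competitive (k : nat) (b r : nat -> R) (c : R) (p : nat -> R -> R) : Prop :=
  is_profile k p /\ forall t, 0 <= t -> Xcost k b r p t <= c * OPT k b r t.

(* slope i active at t iff p_i(t) > 0; prudent iff active slopes at every time
   are a single slope or two consecutive slopes, i.e. contained in {j, j+1}. *)
Definition prudent (k : nat) (p : nat -> R -> R) : Prop :=
  forall t, 0 <= t -> exists j, (j <= k)%nat /\
    forall i, (i <= k)%nat -> 0 < p i t -> (i = j \/ i = S j).

Definition continuous_nonneg (f : R -> R) : Prop :=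
  forall t, 0 <= t -> filterlim f (within (fun x => 0 <= x) (locally t)) (locally (f t)).

Definition s_ratio (b r : nat -> R) (i : nat) : R :=
  (b i - b (i - 1)%nat) / (r (i - 1)%nat - r i).

(* Main.v *)
Require Import Defs.
From Stdlib Require Import Reals Lra Lia.
From Coquelicot Require Import Coquelicot.
Open Scope R_scope.

Lemma cplus (f g : R -> R) x : continuous f x -> continuous g x -> continuous (fun y => f y + g y) x.
Proof. intros; apply (continuous_plus f g x); auto. Qed.
Lemma cminus (f g : R -> R) x : continuous f x -> continuous g x -> continuous (fun y => f y - g y) x.
Proof. intros; apply (continuous_minus f g x); auto. Qed.
Lemma cmult (f g : R -> R) x : continuous f x -> continuous g x -> continuous (fun y => f y * g y) x.
Proof. intros; apply (continuous_mult f g x); auto. Qed.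
Lemma cconst (c x : R) : continuous (fun _ : R => c) x.
Proof. apply continuous_const. Qed.
Lemma cid (x : R) : continuous (fun y : R => y) x.
Proof. apply continuous_id. Qed.
Lemma cabs (f : R -> R) x : continuous f x -> continuous (fun y => Rabs (f y)) x.
Proof. intros; apply (continuous_Rabs_comp f x); auto. Qed.

Definition cl01 (y : R) := Rmin 1 (Rmax 0 y).

Lemma cl01_eq y : cl01 y = (1 + (y + Rabs y)/2 - Rabs ((y + Rabs y)/2 - 1))/2.
Proof.
  unfold cl01, Rmin, Rmax.
  destruct (Rle_dec 0 y); destruct (Rle_dec 1 _);
  repeat (unfold Rabs; destruct Rcase_abs); lra.
Qed.

Lemma cl01_cont x : continuous cl01 x.
Proof.
  apply (continuous_ext (fun y => (1 + (y + Rabs y)/2 - Rabs ((y + Rabs y)/2 - 1))/2)).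
  { intros; symmetry; apply cl01_eq. }
  unfold Rdiv.
  apply cmult; [|apply cconst].
  apply cminus; [apply cplus|apply cabs; apply cminus].
  - apply cconst.
  - apply cmult; [apply cplus; [apply cid | apply cabs, cid] | apply cconst].
  - apply cmult; [apply cplus; [apply cid | apply cabs, cid] | apply cconst].
  - apply cconst.
Qed.

Definition cont0 (f : R -> R) := forall x, continuous (fun y => f (Rabs y)) x.

Lemma cn_cont0 f : continuous_nonneg f -> cont0 f.
Proof.
  intros Hf x. unfold continuous.
  eapply filterlim_comp. 2: apply (Hf (Rabs x) (Rabs_pos x)).
  intros P HP. change (locally x (fun y => P (Rabs y))).
  apply (filter_imp (fun y => 0 <= Rabs y -> P (Rabs y))).
  { intros y H; apply H, Rabs_pos. }
  exact (continuous_Rabs x _ HP).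
Qed.

Lemma cont0_RInt f t : cont0 f -> 0 <= t -> ex_RInt f 0 t.
Proof.
  intros Hf Ht.
  apply ex_RInt_ext with (fun y => f (Rabs y)).
  { intros y [H1 H2]. rewrite Rmin_left in H1 by lra. rewrite Rabs_pos_eq; lra. }
  apply (@ex_RInt_continuous R_CompleteNormedModule); intros; apply Hf.
Qed.

Lemma cont0_sum (g : nat -> R -> R) (c : nat -> R) n :
  (forall i, (i <= n)%nat -> cont0 (g i)) ->
  cont0 (fun t => sum_f_R0 (fun i => g i t * c i) n).
Proof.
  induction n; intros H x; simpl.
  - apply cmult; [apply H; lia | apply cconst].
  - apply cplus.
    + apply IHn; intros; apply H; lia.
    + apply cmult; [apply H; lia | apply cconst].
Qed.

Lemma cont0_comp (G : R -> R) f : (forall x, continuous G x) -> cont0 f -> cont0 (fun t => G (f t)).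
Proof.
  intros HG Hf x. apply (continuous_comp (fun y => f (Rabs y)) G); auto.
Qed.

Definition Fj (b : nat -> R) j x := cl01 ((x - b j) / (b (S j) - b j)).
Definition Hh (k : nat) (b : nat -> R) (j : nat) (x : R) : R :=
  match j with O => 1 | S m => if Compare_dec.lt_dec m k then Fj b m x else 0 end.
Definition qq k b (p : nat -> R -> R) i t :=
  Hh k b i (Bcost k b p t) - Hh k b (S i) (Bcost k b p t).

Lemma Fj_cont b j x : continuous (Fj b j) x.
Proof.
  unfold Fj. apply (continuous_comp (fun x => (x - b j) / (b (S j) - b j)) cl01).
  - unfold Rdiv. apply cmult; [apply cminus; [apply cid|apply cconst]|apply cconst].
  - apply cl01_cont.
Qed.

Lemma Hh_cont k b j x : continuous (Hh k b j) x.
Proof.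
  destruct j. apply cconst.
  destruct (Compare_dec.lt_dec j k) as [l|l].
  - apply (continuous_ext (Fj b j)). intros y; simpl; destruct Compare_dec.lt_dec; tauto.
    apply Fj_cont.
  - apply (continuous_ext (fun _ => 0)). intros y; simpl; destruct Compare_dec.lt_dec; tauto.
    apply cconst.
Qed.

Lemma sum_zero f n : (forall i, (i <= n)%nat -> f i = 0) -> sum_f_R0 f n = 0.
Proof.
  induction n; intros H; simpl. apply H; lia.
  rewrite IHn by (intros; apply H; lia). rewrite H by lia. ring.
Qed.

Lemma sum_two f n j : (S j <= n)%nat ->
  (forall i, (i <= n)%nat -> i <> j -> i <> S j -> f i = 0) ->
  sum_f_R0 f n = f j + f (S j).
Proof.
  induction n; intros Hj H. lia.
  simpl. destruct (Nat.eq_dec (S j) (S n)).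
  - assert (j = n) by lia. subst.
    destruct n. simpl. ring.
    simpl. rewrite sum_zero by (intros; apply H; lia). ring.
  - rewrite IHn by (try lia; intros; apply H; lia).
    rewrite (H (S n)) by lia. ring.
Qed.

Lemma sum_lin (f g : nat -> R) A B n :
  sum_f_R0 (fun i => f i * (A + B * g i)) n =
  A * sum_f_R0 f n + B * sum_f_R0 (fun i => f i * g i) n.
Proof. induction n; simpl. ring. rewrite IHn. ring. Qed.

Lemma bmono k (b : nat -> R) : (forall i, (i < k)%nat -> b i < b (S i)) ->
  forall m n, (m <= n)%nat -> (n <= k)%nat -> b m <= b n.
Proof.
  intros Hb m n Hmn Hn. induction n.
  - assert (m = 0%nat) by lia. subst; lra.
  - destruct (Nat.eq_dec m (S n)). subst; lra.
    assert (b n <= b (S n)) by (apply Rlt_le, Hb; lia).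
    assert (b m <= b n) by (apply IHn; lia). lra.
Qed.

Lemma cl01_1 y : 1 <= y -> cl01 y = 1.
Proof. intros; unfold cl01, Rmin, Rmax; repeat destruct Rle_dec; lra. Qed.
Lemma cl01_0 y : y <= 0 -> cl01 y = 0.
Proof. intros; unfold cl01, Rmin, Rmax; repeat destruct Rle_dec; lra. Qed.
Lemma cl01_id y : 0 <= y <= 1 -> cl01 y = y.
Proof. intros; unfold cl01, Rmin, Rmax; repeat destruct Rle_dec; lra. Qed.

Lemma Fj_one b j x : b j < b (S j) -> b (S j) <= x -> Fj b j x = 1.
Proof.
  intros H1 H2. unfold Fj. apply cl01_1.
  set (y := (x - b j) / (b (S j) - b j)).
  assert (y * (b (S j) - b j) = x - b j) by (unfold y; field; lra). nra.
Qed.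
Lemma Fj_zero b j x : b j < b (S j) -> x <= b j -> Fj b j x = 0.
Proof.
  intros H1 H2. unfold Fj. apply cl01_0.
  set (y := (x - b j) / (b (S j) - b j)).
  assert (y * (b (S j) - b j) = x - b j) by (unfold y; field; lra). nra.
Qed.
Lemma Fj_mid b j x : b j < b (S j) -> b j <= x <= b (S j) ->
  Fj b j x = (x - b j) / (b (S j) - b j) /\
  0 <= (x - b j) / (b (S j) - b j) <= 1.
Proof.
  intros H1 H2. unfold Fj.
  set (y := (x - b j) / (b (S j) - b j)).
  assert (y * (b (S j) - b j) = x - b j) by (unfold y; field; lra).
  assert (0 <= y <= 1) by nra. split; auto. apply cl01_id; auto.
Qed.

Section Combi.
Variable k : nat.
Variable b : nat -> R.
Hypothesis Hb : forall i, (i < k)%nat -> b i < b (S i).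

Lemma Hval j x : (j < k)%nat -> b j <= x <= b (S j) ->
  (forall i, (i <= j)%nat -> Hh k b i x = 1) /\
  (forall i, (S (S j) <= i)%nat -> Hh k b i x = 0) /\
  Hh k b (S j) x = (x - b j) / (b (S j) - b j) /\
  0 <= (x - b j) / (b (S j) - b j) <= 1.
Proof.
  intros Hj Hx. split; [|split].
  - intros i Hi. destruct i. reflexivity. simpl.
    destruct Compare_dec.lt_dec; [|lia].
    apply Fj_one. apply Hb; lia.
    assert (b (S i) <= b j) by (apply (bmono k b Hb); lia). lra.
  - intros i Hi. destruct i. lia. simpl.
    destruct Compare_dec.lt_dec; [|reflexivity].
    apply Fj_zero. apply Hb; lia.
    assert (b (S j) <= b i) by (apply (bmono k b Hb); lia). lra.
  - simpl. destruct Compare_dec.lt_dec; [|lia].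
    apply Fj_mid; auto.
Qed.

Lemma findj x : (1 <= k)%nat -> b 0 <= x <= b k ->
  exists j, (j < k)%nat /\ b j <= x <= b (S j).
Proof.
  intros Hk Hx.
  assert (forall n, (1 <= n)%nat -> (n <= k)%nat -> x <= b n ->
    exists j, (j < n)%nat /\ b j <= x <= b (S j)).
  { induction n; intros H1 H2 H3. lia.
    destruct (Nat.eq_dec n 0). subst. exists 0%nat. split; [lia|lra].
    destruct (Rle_dec x (b n)).
    - destruct IHn as [j [Hj1 Hj2]]; try lia; auto. exists j; split; [lia|auto].
    - exists n; split; [lia|lra]. }
  apply H; auto; lra.
Qed.

Definition Qf x i := Hh k b i x - Hh k b (S i) x.

Lemma qprops x : (1 <= k)%nat -> b 0 <= x <= b k ->
  exists j, (j < k)%nat /\ b j <= x <= b (S j) /\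
   (forall i, (i <= k)%nat -> i <> j -> i <> S j -> Qf x i = 0) /\
   Qf x j = 1 - (x - b j) / (b (S j) - b j) /\
   Qf x (S j) = (x - b j) / (b (S j) - b j) /\
   0 <= (x - b j) / (b (S j) - b j) <= 1.
Proof.
  intros Hk Hx. destruct (findj x Hk Hx) as [j [Hj Hjx]].
  destruct (Hval j x Hj Hjx) as [H1 [H2 [H3 H4]]].
  exists j. split; auto. split; auto. split; [|split; [|split]]; auto.
  - intros i Hi Hij Hij'. unfold Qf.
    destruct (Nat.lt_ge_cases i j).
    + rewrite !H1 by lia. ring.
    + rewrite !H2 by lia. ring.
  - unfold Qf. rewrite H1 by lia. rewrite H3. ring.
  - unfold Qf. rewrite H3, H2 by lia. ring.
Qed.

Lemma Qsum x (w : nat -> R) : (1 <= k)%nat -> b 0 <= x <= b k ->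
  exists j, (j < k)%nat /\ b j <= x <= b (S j) /\
   sum_f_R0 (fun i => Qf x i * w i) k =
   (1 - (x - b j) / (b (S j) - b j)) * w j + (x - b j) / (b (S j) - b j) * w (S j).
Proof.
  intros Hk Hx. destruct (qprops x Hk Hx) as [j [Hj [Hjx [H0 [H1 [H2 H3]]]]]].
  exists j; split; auto; split; auto.
  rewrite (sum_two _ k j) by (try lia; intros; rewrite H0 by auto; ring).
  rewrite H1, H2. ring.
Qed.

End Combi.

Section Line.
Variable k : nat.
Variables b r : nat -> R.
Hypothesis Hb : forall i, (i < k)%nat -> b i < b (S i).
Hypothesis Hr : forall i, (i < k)%nat -> r (S i) < r i.
Hypothesis Hs : forall i, (1 <= i)%nat -> (i < k)%nat -> s_ratio b r i < s_ratio b r (S i).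

Definition sig m := (r m - r (S m)) / (b (S m) - b m).

Lemma sig_inv m : (m < k)%nat -> sig m = / s_ratio b r (S m).
Proof.
  intros Hm. unfold sig, s_ratio. replace (S m - 1)%nat with m by lia.
  assert (b m < b (S m)) by auto. assert (r (S m) < r m) by auto.
  field. lra.
Qed.

Lemma s_pos m : (m < k)%nat -> 0 < s_ratio b r (S m).
Proof.
  intros Hm. unfold s_ratio. replace (S m - 1)%nat with m by lia.
  assert (b m < b (S m)) by auto. assert (r (S m) < r m) by auto.
  apply Rdiv_lt_0_compat; lra.
Qed.

Lemma sig_dec m : (S m < k)%nat -> sig (S m) <= sig m.
Proof.
  intros Hm. rewrite !sig_inv by lia.
  apply Rlt_le, Rinv_lt_contravar.
  apply Rmult_lt_0_compat; apply s_pos; lia.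
  apply Hs; lia.
Qed.

Lemma sig_mono m n : (m <= n)%nat -> (n < k)%nat -> sig n <= sig m.
Proof.
  intros Hmn Hn. induction n.
  - assert (m = 0%nat) by lia. subst; lra.
  - destruct (Nat.eq_dec m (S n)). subst; lra.
    assert (sig (S n) <= sig n) by (apply sig_dec; lia).
    assert (sig n <= sig m) by (apply IHn; lia). lra.
Qed.

Lemma r_step m : (m < k)%nat -> r (S m) = r m - sig m * (b (S m) - b m).
Proof.
  intros Hm. unfold sig. assert (b m < b (S m)) by auto. field. lra.
Qed.

Lemma line j i : (j < k)%nat -> (i <= k)%nat -> r i >= r j - sig j * (b i - b j).
Proof.
  intros Hj Hi. destruct (Nat.le_ge_cases j i).
  - assert (forall d, (j + d <= k)%nat -> r (j + d)%nat >= r j - sig j * (b (j + d)%nat - b j)).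
    { induction d; intros Hd. rewrite Nat.add_0_r; lra.
      replace (j + S d)%nat with (S (j + d)) by lia.
      rewrite r_step by lia.
      assert (sig (j + d)%nat <= sig j) by (apply sig_mono; lia).
      assert (b (j + d)%nat < b (S (j + d))) by (apply Hb; lia).
      assert (0 <= (sig j - sig (j + d)%nat) * (b (S (j + d)) - b (j + d)%nat))
        by (apply Rmult_le_pos; lra).
      specialize (IHd ltac:(lia)). nra. }
    replace i with (j + (i - j))%nat by lia. apply H0; lia.
  - assert (forall d i, (i + d = j)%nat -> r i >= r j - sig j * (b i - b j)).
    { induction d; intros i0 Hd. replace i0 with j by lia. lra.
      specialize (IHd (S i0) ltac:(lia)).
      assert (E := r_step i0 ltac:(lia)).
      assert (sig j <= sig i0) by (apply sig_mono; lia).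
      assert (b i0 < b (S i0)) by (apply Hb; lia).
      assert (0 <= (sig i0 - sig j) * (b (S i0) - b i0)) by (apply Rmult_le_pos; lra).
      nra. }
    apply (H0 (j - i)%nat). lia.
Qed.

End Line.

Theorem theorem4p1 (k : nat) (b r : nat -> R) (c : R)
  (Hb : forall i, (i < k)%nat -> b i < b (S i))
  (Hr : forall i, (i < k)%nat -> r (S i) < r i)
  (Hrk : 0 <= r k)
  (Hs : forall i, (1 <= i)%nat -> (i < k)%nat -> s_ratio b r i < s_ratio b r (S i))
  (Hc : 1 <= c)
  (p : nat -> R -> R)
  (Hpcont : forall i, (i <= k)%nat -> continuous_nonneg (p i))
  (Hp : competitive k b r c p) :
  exists q : nat -> R -> R,
    (forall i t, (i <= k)%nat -> 0 <= t -> ex_RInt (q i) 0 t) /\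
    prudent k q /\ competitive k b r c q.
Proof.
  destruct Hp as [Hprof Hcomp].
  assert (Hc0 : forall i, (i <= k)%nat -> cont0 (p i)) by (intros; apply cn_cont0; auto).
  destruct (Nat.eq_dec k 0) as [Hk0|Hk].
  { exists p. split; [intros; apply cont0_RInt; auto|]. split; [|split; auto].
    intros t Ht. exists 0%nat. split; [lia|]. intros i Hi _. left; lia. }
  assert (Hk1 : (1 <= k)%nat) by lia.
  assert (HB : cont0 (Bcost k b p)) by (apply cont0_sum; auto).
  assert (Hqc : forall i, cont0 (qq k b p i)).
  { intros i. unfold qq. intros x.
    apply cminus; apply (continuous_comp (fun y => Bcost k b p (Rabs y)) (Hh k b _));
      auto; apply Hh_cont. }
  assert (Hbnd : forall t, 0 <= t -> b 0%nat <= Bcost k b p t <= b k).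
  { intros t Ht. destruct (Hprof t Ht) as [Hpos Hsum]. unfold Bcost. split.
    - apply Rle_trans with (sum_f_R0 (fun i => p i t * (b 0%nat + 0 * b i)) k).
      + rewrite sum_lin, Hsum. lra.
      + apply sum_Rle. intros i Hi.
        assert (b 0%nat <= b i) by (apply (bmono k b Hb); lia).
        specialize (Hpos i Hi). nra.
    - apply Rle_trans with (sum_f_R0 (fun i => p i t * (b k + 0 * b i)) k).
      + apply sum_Rle. intros i Hi.
        assert (b i <= b k) by (apply (bmono k b Hb); lia).
        specialize (Hpos i Hi). nra.
      + rewrite sum_lin, Hsum. lra. }
  assert (HBq : forall t, 0 <= t -> Bcost k b (qq k b p) t = Bcost k b p t).
  { intros t Ht. change (Bcost k b (qq k b p) t) with
      (sum_f_R0 (fun i => Qf k b (Bcost k b p t) i * b i) k).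
    destruct (Qsum k b Hb (Bcost k b p t) b Hk1 (Hbnd t Ht)) as [j [Hj [Hjx E]]].
    rewrite E. assert (b j < b (S j)) by auto. field. lra. }
  assert (HRq : forall t, 0 <= t -> Rrate k r (qq k b p) t <= Rrate k r p t).
  { intros t Ht. change (Rrate k r (qq k b p) t) with
      (sum_f_R0 (fun i => Qf k b (Bcost k b p t) i * r i) k).
    destruct (Qsum k b Hb (Bcost k b p t) r Hk1 (Hbnd t Ht)) as [j [Hj [Hjx E]]].
    rewrite E. set (x := Bcost k b p t) in *.
    destruct (Hprof t Ht) as [Hpos Hsum].
    apply Rle_trans with (sum_f_R0 (fun i => p i t * ((r j + sig b r j * b j) + (- sig b r j) * b i)) k).
    - rewrite sum_lin, Hsum. fold (Bcost k b p t). fold x.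
      rewrite (r_step k b r Hb j Hj). assert (b j < b (S j)) by auto.
      right. field. lra.
    - unfold Rrate. apply sum_Rle. intros i Hi.
      assert (L := line k b r Hb Hr Hs j i Hj Hi).
      specialize (Hpos i Hi). apply Rmult_le_compat_l; auto. lra. }
  exists (qq k b p). split; [intros; apply cont0_RInt; auto|]. split.
  - intros t Ht. destruct (qprops k b Hb (Bcost k b p t) Hk1 (Hbnd t Ht))
      as [j [Hj [Hjx [H0 _]]]].
    exists j. split; [lia|]. intros i Hi Hpi.
    destruct (Nat.eq_dec i j); auto. destruct (Nat.eq_dec i (S j)); auto.
    exfalso. unfold qq in Hpi. change (0 < Qf k b (Bcost k b p t) i) in Hpi.
    rewrite H0 in Hpi by auto. lra.
  - split.
    + intros t Ht. destruct (qprops k b Hb (Bcost k b p t) Hk1 (Hbnd t Ht))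
        as [j [Hj [Hjx [H0 [H1 [H2 H3]]]]]]. split.
      * intros i Hi. change (0 <= Qf k b (Bcost k b p t) i).
        destruct (Nat.eq_dec i j). subst; rewrite H1; lra.
        destruct (Nat.eq_dec i (S j)). subst; rewrite H2; lra.
        rewrite H0 by auto; lra.
      * change (sum_f_R0 (fun i => Qf k b (Bcost k b p t) i) k = 1).
        rewrite (sum_two _ k j) by (try lia; intros; apply H0; auto).
        rewrite H1, H2. ring.
    + intros t Ht. apply Rle_trans with (Xcost k b r p t); [|apply Hcomp; auto].
      unfold Xcost. rewrite HBq by auto. apply Rplus_le_compat_l.
      apply RInt_le; auto.
      * apply cont0_RInt; auto. apply cont0_sum; auto.
      * apply cont0_RInt; auto. apply cont0_sum; auto.
      * intros y Hy. apply HRq; lra.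
Qed.
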